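(* Let $N_e\ge2$, $L\ge1$ be integers, $\sigma_r>0$, $c_4\in\mathbb{C}\setminus\{0\}$, $d>0$. For $\phi\in(-\pi/2,\pi/2)$ let $$\mathbf{C}(\phi)=|c_4|^2L\,\mathbf{I}_L\otimes\big(d\,\mathbf{c}(\phi)\mathbf{c}(\phi)^H\big)+\sigma_r^2\mathbf{I}_{N_eL},$$ $F_{\phi\phi}=\mathrm{tr}\!\big(\mathbf{C}^{-1}\frac{\partial\mathbf{C}}{\partial\phi}\mathbf{C}^{-1}\frac{\partial\mathbf{C}}{\partial\phi}\big)$ and $\mathrm{CRB}(\phi)=1/F_{\phi\phi}$. Then $$\mathrm{CRB}(\phi)=\frac{6\sigma_r^2(\sigma_r^2+|c_4|^2LdN_e)}{|c_4|^4L^3d^2\pi^2\cos^2(\phi)N_e^2(N_e^2-1)}.$$ Moreover, if $\phi\sim\mathcal{U}(-\pi/2,\pi/2)$ then for $\epsilon>0$, with $u(\epsilon)=\sqrt6\,\sigma_r\big(\epsilon|c_4|^4L^3d^2\pi^2N_e^2(N_e^2-1)\big)^{-1/2}(\sigma_r^2+|c_4|^2LdN_e)^{1/2}$, we have $P(\mathrm{CRB}(\phi)>\epsilon)=\frac2\pi\sin^{-1}(u(\epsilon))$ if $u(\epsilon)<1$, and $=1$ otherwise.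
   Context: $j=\sqrt{-1}$. $\mathbf{c}(\phi)\in\mathbb{C}^{N_e}$ has $i$-th entry $e^{-j\pi\sin(\phi)\frac{N_e-(2i-1)}{2}}$. This models a weak sensing eavesdropper (not knowing the transmitted signal) under the SSJB scheme: its vectorized observation is zero-mean complex Gaussian with covariance $\mathbf{C}(\phi)$, where in the paper $d=P\tau|\alpha|^2N$ ($P>0$ transmit power, $\tau\in(0,1)$ data power fraction, $\alpha$ the coefficient of the data beam along the normalized target steering vector, $N$ the number of BS transmit antennas); $\mathrm{CRB}(\phi)$ is the inverse Fisher information for $\phi$. *)

(* Defs.v *)
From HB Require Import structures.
From mathcomp Require Import all_boot all_order all_algebra.
From mathcomp Require Import all_classical all_reals all_analysis.
From mathcomp Require Import complex mxtens.

Set Implicit Arguments.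
Unset Strict Implicit.
Unset Printing Implicit Defensive.

Import Order.TTheory GRing.Theory Num.Theory.
Local Open Scope ring_scope.
Local Open Scope complex_scope.

Section Defs.
Variable R : realType.

Definition expj (theta : R) : R[i] := cos theta +i* sin theta.

(* steering vector c(phi) in C^{Ne}: the (1-indexed) k-th entry is
   exp(-j pi sin(phi) (Ne - (2k-1))/2); here k = i + 1 for i : 'I_Ne. *)
Definition steer (Ne : nat) (phi : R) : 'cV[R[i]]_Ne :=
  \col_(i < Ne) expj (- (pi * sin phi * (Ne%:R - (2 * (i%:R + 1) - 1)) / 2)).

Definition modc (z : R[i]) : R :=
  Num.sqrt (complex.Re z ^+ 2 + complex.Im z ^+ 2).

Definition herm (m n : nat) (A : 'M[R[i]]_(m, n)) : 'M[R[i]]_(n, m) :=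
  (map_mx (fun z : R[i] => z^*) A)^T.

Definition cderive (f : R -> R[i]) (x : R) : R[i] :=
  (derive1 (fun t => complex.Re (f t)) x) +i* (derive1 (fun t => complex.Im (f t)) x).

Definition mderive (m n : nat) (M : R -> 'M[R[i]]_(m, n)) (x : R)
  : 'M[R[i]]_(m, n) :=
  \matrix_(i, j) cderive (fun t => M t i j) x.

Definition Cmat (Ne L : nat) (sigma : R) (c4 : R[i]) (d : R) (phi : R)
  : 'M[R[i]]_(L * Ne) :=
  (`|c4| ^+ 2 * L%:R) *: ((1%:M : 'M[R[i]]_L) *t
       ((d%:C) *: (steer Ne phi *m herm (steer Ne phi))))
  + (sigma ^+ 2)%:C *: 1%:M.

Definition Fisher (Ne L : nat) (sigma : R) (c4 : R[i]) (d : R) (phi : R)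
  : R[i] :=
  let C := Cmat Ne L sigma c4 d phi in
  let dC := mderive (Cmat Ne L sigma c4 d) phi in
  \tr (invmx C *m dC *m invmx C *m dC).

Definition CRB (Ne L : nat) (sigma : R) (c4 : R[i]) (d : R) (phi : R)
  : R[i] := (Fisher Ne L sigma c4 d phi)^-1.

Lemma mpi2_lt_pi2 : - (pi / 2) < pi / 2 :> R.
Proof.
have h : 0 < pi / 2 :> R by rewrite divr_gt0 // pi_gt0.
by rewrite (lt_trans _ h) // oppr_lt0.
Qed.

End Defs.

(* Main.v *)
Require Import Defs.
From HB Require Import structures.
From mathcomp Require Import all_boot all_order all_algebra.
From mathcomp Require Import all_classical all_reals all_analysis.
From mathcomp Require Import complex mxtens.
From mathcomp Require Import ring lra.
Import Order.TTheory GRing.Theory Num.Theory.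
Local Open Scope ring_scope.
Local Open Scope complex_scope.
Section Tens.
Variable R : comPzRingType.

Lemma tensmxZr m n p q (A : 'M[R]_(m,n)) (k : R) (B : 'M[R]_(p,q)) :
  A *t (k *: B) = k *: (A *t B).
Proof. by apply/matrixP => i j; rewrite !mxE mulrCA. Qed.

Lemma tensmxDr m n p q (A : 'M[R]_(m,n)) (B1 B2 : 'M[R]_(p,q)) :
  A *t (B1 + B2) = A *t B1 + A *t B2.
Proof. by apply/matrixP => i j; rewrite !mxE mulrDr. Qed.

Lemma tensmxNr m n p q (A : 'M[R]_(m,n)) (B : 'M[R]_(p,q)) :
  A *t (- B) = - (A *t B).
Proof. by apply/matrixP => i j; rewrite !mxE mulrN. Qed.

Lemma tensmx11 m n : (1%:M : 'M[R]_m) *t (1%:M : 'M[R]_n) = 1%:M.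
Proof.
apply/matrixP => i j.
case: (mxtens_indexP i) => i1 i2; case: (mxtens_indexP j) => j1 j2.
rewrite tensmxE !mxE (inj_eq (can_inj (@mxtens_indexK m n))) xpair_eqE.
by case: (i1 == j1); case: (i2 == j2); rewrite /= ?mulr1 ?mulr0 ?mul0r.
Qed.

Lemma mxtrace_tens m n (A : 'M[R]_m) (B : 'M[R]_n) :
  \tr (A *t B) = \tr A * \tr B.
Proof.
rewrite /mxtrace (reindex (@mxtens_index m n)) /=; last first.
  by exists (@mxtens_unindex m n) => x _; rewrite ?mxtens_indexK ?mxtens_unindexK.
rewrite mulr_suml.
rewrite (eq_bigr (fun p => A p.1 p.1 * B p.2 p.2)); last first.
  by move=> [i j] _; rewrite tensmxE.
rewrite -(pair_big predT predT (fun i j => A i i * B j j)) /=.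
by apply: eq_bigr => i _; rewrite mulr_sumr.
Qed.
End Tens.
Section Sums.
Variable R : realType.
Definition X (N k : nat) : R := N%:R - (2 * (k%:R + 1) - 1).

Lemma sumX N : \sum_(k < N) X N k = 0.
Proof.
elim: N => [|N IH]; first by rewrite big_ord0.
rewrite big_ord_recr /=.
have -> : \sum_(i < N) X N.+1 (widen_ord (leqnSn N) i) = \sum_(i < N) (X N i + 1).
  by apply: eq_bigr => i _; rewrite /X /= -natr1; ring.
by rewrite big_split /= IH sumr_const card_ord /X -natr1; ring.
Qed.

Lemma sumX2 N : \sum_(k < N) X N k ^+ 2 = N%:R * (N%:R ^+ 2 - 1) / 3.
Proof.
elim: N => [|N IH]; first by rewrite big_ord0 -[0%:R]/0 !mul0r.
rewrite big_ord_recr /=.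
have -> : \sum_(i < N) X N.+1 (widen_ord (leqnSn N) i) ^+ 2
   = \sum_(i < N) (X N i ^+ 2 + 2 * X N i + 1).
  by apply: eq_bigr => i _; rewrite /X /= -natr1; ring.
rewrite !big_split /= IH -big_distrr /= sumX sumr_const card_ord /X -natr1.
by field.
Qed.
End Sums.
Section An.
Variable R : realType.

Lemma is_derive_wsin (w x : R) : is_derive x 1 (fun t => w * sin t) (w * cos x).
Proof.
have := is_deriveZ w (is_derive_sin x).
by [].
Qed.

Lemma cderive_expj (K1 K2 : R[i]) (w x : R) :
  cderive (fun t => K1 * expj (w * sin t) + K2) x
  = K1 * ((0 +i* (w * cos x)) * expj (w * sin x)).
Proof.
have hc : is_derive x 1 (fun t => cos (w * sin t)) (- sin (w * sin x) * (w * cos x)).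
  exact: (is_derive1_comp (f := cos) (g := fun t => w * sin t)
            (is_derive_cos _) (is_derive_wsin w x)).
have hs : is_derive x 1 (fun t => sin (w * sin t)) (cos (w * sin x) * (w * cos x)).
  exact: (is_derive1_comp (f := sin) (g := fun t => w * sin t)
            (is_derive_sin _) (is_derive_wsin w x)).
case: K1 => a b; case: K2 => a2 b2.
rewrite /cderive /expj /=.
have hre : is_derive x 1 (fun t => a * cos (w * sin t) - b * sin (w * sin t) + a2)
   (a * (- sin (w * sin x) * (w * cos x)) - b * (cos (w * sin x) * (w * cos x)) + 0).
  by apply: is_deriveD.
have him : is_derive x 1 (fun t => a * sin (w * sin t) + b * cos (w * sin t) + b2)
   (a * (cos (w * sin x) * (w * cos x)) + b * (- sin (w * sin x) * (w * cos x)) + 0).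
  by apply: is_deriveD.
rewrite !derive1E.
rewrite !derive_val.
apply/eqP; rewrite eq_complex /=; apply/andP; split; apply/eqP; ring.
Qed.
End An.
Section Block.
Variable F : fieldType.
Variables (L n : nat) (c c' : 'cV[F]_n) (r r' : 'rV[F]_n) (nn nu be s2 : F).
Hypotheses (hrc : r *m c = nn%:M) (hrc' : r *m c' = 0) (hr'c : r' *m c = 0)
  (hr'c' : r' *m c' = nu%:M) (hs2 : s2 != 0) (hg : s2 + be * nn != 0).

Let P := c *m r.
Let D := c' *m r + c *m r'.
Let Cm : 'M[F]_(L * n) := be *: ((1%:M : 'M[F]_L) *t P) + s2 *: 1%:M.
Let dCm : 'M[F]_(L * n) := be *: ((1%:M : 'M[F]_L) *t D).
Let ga := be / (s2 + be * nn).
Let Mb := (1%:M : 'M[F]_n) - ga *: P.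
Let Ci : 'M[F]_(L * n) := s2^-1 *: ((1%:M : 'M[F]_L) *t Mb).

Lemma PP : P *m P = nn *: P.
Proof. by rewrite /P mulmxA -(mulmxA c) hrc mul_mx_scalar scalemxAl. Qed.

Lemma CiC : Ci *m Cm = 1%:M.
Proof.
rewrite /Ci /Cm /Mb tensmxDr tensmxNr tensmxZr tensmx11.
rewrite -!scalemxAl mulmxDr !mulmxBl -!scalemxAr -!scalemxAl !mul1mx !mulmx1.
rewrite tensmx_mul mul1mx PP tensmxZr.
rewrite /ga; move: ((1%:M : 'M[F]_L) *t P) => Q.
apply/matrixP => i j; rewrite !mxE.
by field; rewrite hs2 hg.
Qed.

Lemma invCm : invmx Cm = Ci.
Proof.
have [_ uC] := mulmx1_unit CiC.
by rewrite -[RHS]mulmx1 -(mulmxV uC) mulmxA CiC mul1mx.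
Qed.

Lemma MD : Mb *m D = c' *m r + (1 - ga * nn) *: (c *m r').
Proof.
rewrite /Mb /D /P mulmxBl mul1mx -scalemxAl !mulmxDr.
rewrite !mulmxA -!(mulmxA c) hrc hrc' mul0mx mulmx0 add0r mul_scalar_mx -scalemxAr.
rewrite scalerA scalerBl scale1r addrA.
by [].  
Qed.

Lemma trXX : \tr ((c' *m r + (1 - ga * nn) *: (c *m r')) *m
                   (c' *m r + (1 - ga * nn) *: (c *m r')))
   = 2%:R * (1 - ga * nn) * nn * nu.
Proof.
rewrite !mulmxDl !mulmxDr -!scalemxAl -!scalemxAr.
have e1 : c' *m r *m (c' *m r) = 0 by rewrite mulmxA -(mulmxA c') hrc' mulmx0 mul0mx.
have e2 : c *m r' *m (c *m r') = 0 by rewrite mulmxA -(mulmxA c) hr'c mulmx0 mul0mx.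
have e3 : \tr (c' *m r *m (c *m r')) = nn * nu.
  rewrite mulmxA -(mulmxA c') hrc mul_mx_scalar -scalemxAl mxtraceZ mxtrace_mulC hr'c'.
  by rewrite mxtrace_scalar mulr1n.
have e4 : \tr (c *m r' *m (c' *m r)) = nn * nu.
  rewrite mulmxA -(mulmxA c) hr'c' mul_mx_scalar -scalemxAl mxtraceZ mxtrace_mulC hrc.
  by rewrite mxtrace_scalar mulr1n mulrC.
rewrite e1 e2 !scaler0 add0r addr0 !mxtraceD !mxtraceZ e3 e4.
by rewrite mulr_natl mulr2n; ring.
Qed.

Lemma trace_main : \tr (invmx Cm *m dCm *m invmx Cm *m dCm)
  = L%:R * (2%:R * (s2^-1 * be) ^+ 2 * (1 - ga * nn) * nn * nu).
Proof.
rewrite invCm /Ci /dCm. do 4 rewrite -?scalemxAl -?scalemxAr ?scalerA.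
rewrite !tensmx_mul !mul1mx mxtraceZ mxtrace_tens mxtrace1.
rewrite -mulmxA MD trXX; ring.
Qed.
End Block.

Section Cx.
Variable R : realType.

Lemma expj_conj (a : R) : conjc (expj a) = expj (- a).
Proof. by rewrite /expj /= cosN sinN. Qed.

Lemma expjD (a b : R) : expj a * expj b = expj (a + b).
Proof.
rewrite /expj /= cosD sinD; apply/eqP; rewrite eq_complex /=.
by apply/andP; split; apply/eqP; ring.
Qed.

Lemma conjM (x y : R[i]) : conjc (x * y) = conjc x * conjc y.
Proof.
case: x => a b; case: y => a' b'; apply/eqP; rewrite eq_complex /=.
by apply/andP; split; apply/eqP; ring.
Qed.

Lemma numconjE (x : R[i]) : Num.conj x = conjc x.
Proof. reflexivity. Qed.

Lemma realCB (a b : R) : (a - b)%:C = a%:C - b%:C :> R[i].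
Proof. by apply/eqP; rewrite eq_complex /= subr0 !eqxx. Qed.

Lemma realCM (a b : R) : (a * b)%:C = a%:C * b%:C :> R[i].
Proof. by apply/eqP; rewrite eq_complex /=; apply/andP; split; apply/eqP; ring. Qed.

Lemma realCX2 (a : R) : (a ^+ 2)%:C = a%:C ^+ 2 :> R[i].
Proof. by rewrite !expr2 realCM. Qed.

Lemma realCV (a : R) : (a^-1)%:C = (a%:C)^-1 :> R[i].
Proof. exact: fmorphV. Qed.
Lemma realCD (a b : R) : (a + b)%:C = a%:C + b%:C :> R[i].
Proof. exact: rmorphD. Qed.
Lemma realCXn (a : R) n : (a ^+ n)%:C = a%:C ^+ n :> R[i].
Proof. exact: rmorphXn. Qed.
Lemma realC_nat n : (n%:R : R)%:C = n%:R :> R[i].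
Proof. exact: rmorph_nat. Qed.
Lemma realC_eq0 (a : R) : (a%:C == 0 :> R[i]) = (a == 0).
Proof. by rewrite eq_complex /= eqxx andbT. Qed.
Lemma normc_modc (z : R[i]) : `|z| = (modc z)%:C.
Proof. by case: z. Qed.

Lemma expj0 : expj (0 : R) = 1.
Proof. by rewrite /expj cos0 sin0. Qed.

Lemma conj_i : conjc (Complex 0 1 : R[i]) = - Complex 0 1.
Proof. by apply/eqP; rewrite eq_complex /= oppr0 !eqxx. Qed.

Lemma iC (y : R) : Complex 0 1 * y%:C = 0 +i* y.
Proof. by apply/eqP; rewrite eq_complex /=; apply/andP; split; apply/eqP; ring. Qed.

Definition om (N k : nat) : R := - (pi * X R N k / 2).

Lemma steerE N t (k : 'I_N) : steer N t k 0 = expj (om N k * sin t).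
Proof. by rewrite /steer mxE /om /X; congr expj; ring. Qed.

Lemma angE N (k : nat) (t : R) :
  - (pi * sin t * (N%:R - (2 * (k%:R + 1) - 1)) / 2) = om N k * sin t.
Proof. by rewrite /om /X; ring. Qed.

Definition dsteer N (phi : R) : 'cV[R[i]]_N :=
  \col_k (Complex 0 1 * (om N k * cos phi)%:C * steer N phi k 0).

Lemma mderive_Cmat Ne L sigma (c4 : R[i]) d phi :
  mderive (Cmat Ne L sigma c4 d) phi =
   (`|c4| ^+ 2 * L%:R * d%:C) *: ((1%:M : 'M[R[i]]_L) *t
     (dsteer Ne phi *m herm (steer Ne phi) + steer Ne phi *m herm (dsteer Ne phi))).
Proof.
apply/matrixP => i j.
case: (mxtens_indexP i) => i1 i2; case: (mxtens_indexP j) => j1 j2.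
rewrite [LHS]mxE.
set K1 := `|c4| ^+ 2 * L%:R * ((i1 == j1)%:R * d%:C).
set K2 := (sigma ^+ 2)%:C * (mxtens_index (i1, i2) == mxtens_index (j1, j2))%:R.
have -> : (fun t => Cmat Ne L sigma c4 d t (mxtens_index (i1, i2)) (mxtens_index (j1, j2)))
   = (fun t => K1 * expj ((om Ne i2 - om Ne j2) * sin t) + K2).
  apply: funext => t; rewrite /Cmat !mxE !mxtens_indexK /= big_ord1 !mxE.
  rewrite !angE expj_conj expjD /K1 /K2; congr (_ + _).
  rewrite !mulrA; congr (_ * expj _); ring.
rewrite cderive_expj /K1.
rewrite !mxE !mxtens_indexK /= !big_ord1 /dsteer /herm !mxE !angE ?numconjE !conjM conj_i conjc_real !expj_conj -iC [X in expj X]mulrBl -expjD.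
rewrite !(mulrBl, mulrBr, realCB). ring.
Qed.

Lemma expj_unit (a : R) : conjc (expj a) * expj a = 1.
Proof. by rewrite expj_conj expjD addNr expj0. Qed.

Lemma sum_om N : \sum_(k < N) om N k = 0.
Proof.
rewrite (eq_bigr (fun k : 'I_N => (- (pi / 2)) * X R N k)); last first.
  by move=> k _; rewrite /om; ring.
by rewrite -big_distrr /= sumX mulr0.
Qed.

Lemma sum_om2 N : \sum_(k < N) om N k ^+ 2 = pi ^+ 2 * (N%:R * (N%:R ^+ 2 - 1)) / 12.
Proof.
rewrite (eq_bigr (fun k : 'I_N => (pi ^+ 2 / 4) * X R N k ^+ 2)); last first.
  by move=> k _; rewrite /om; field.
rewrite -big_distrr /= sumX2; by field.
Qed.

Let ii : R[i] := Complex 0 1.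

Lemma steer_entry N t (k : 'I_N) : steer N t k 0 = expj (om N k * sin t).
Proof. exact: steerE. Qed.

Lemma hrc N phi : herm (steer N phi) *m steer N phi = (N%:R : R[i])%:M.
Proof.
apply/matrixP => i j; rewrite !ord1 !mxE eqxx mulr1n.
rewrite (eq_bigr (fun _ => 1)); first by rewrite sumr_const card_ord.
by move=> k _; rewrite !mxE ?numconjE !angE expj_unit.
Qed.

Lemma hrc' N phi : herm (steer N phi) *m dsteer N phi = 0.
Proof.
apply/matrixP => i j; rewrite !ord1 !mxE.
rewrite (eq_bigr (fun k : 'I_N => Complex 0 1 * (om N k * cos phi)%:C)).
  by rewrite -big_distrr /= -rmorph_sum /= -big_distrl /= sum_om mul0r mulr0.
move=> k _; rewrite !mxE ?numconjE !angE.
set e := expj _.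
by rewrite mulrC -!mulrA [e * _]mulrC expj_unit mulr1.
Qed.

Lemma hr'c N phi : herm (dsteer N phi) *m steer N phi = 0.
Proof.
apply/matrixP => i j; rewrite !ord1 !mxE.
rewrite (eq_bigr (fun k : 'I_N => - Complex 0 1 * (om N k * cos phi)%:C)).
  by rewrite -big_distrr /= -rmorph_sum /= -big_distrl /= sum_om mul0r mulr0.
move=> k _; rewrite !mxE ?numconjE !angE !conjM conj_i conjc_real.
set e := expj _.
by rewrite -!mulrA expj_unit mulr1.
Qed.

Lemma hr'c' N phi : herm (dsteer N phi) *m dsteer N phi
   = ((cos phi ^+ 2 * (pi ^+ 2 * (N%:R * (N%:R ^+ 2 - 1)) / 12))%:C)%:M.
Proof.
apply/matrixP => i j; rewrite !ord1 !mxE eqxx mulr1n.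
rewrite (eq_bigr (fun k : 'I_N => ((om N k * cos phi) ^+ 2)%:C)).
  rewrite -rmorph_sum /=; congr (_ %:C).
  rewrite (eq_bigr (fun k : 'I_N => cos phi ^+ 2 * om N k ^+ 2)).
    by rewrite -big_distrr /= sum_om2.
  by move=> k _; ring.
move=> k _; rewrite !mxE ?numconjE !angE !conjM conj_i conjc_real.
set e := expj _.
have h : - Complex 0 1 * Complex 0 1 = 1 :> R[i].
  by apply/eqP; rewrite eq_complex /=; apply/andP; split; apply/eqP; ring.
rewrite realCX2 realCM.
transitivity ((- Complex 0 1 * Complex 0 1) * (om N k)%:C ^+ 2 * (cos phi)%:C ^+ 2 * (conjc e * e)).
  by ring.
by rewrite h expj_unit; ring.
Qed.
End Cx.

Section Fish.
Variable R : realType.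
Lemma Fisher_val Ne L sigma (c4 : R[i]) d phi : (0 < Ne)%N -> (0 < L)%N -> 0 < sigma -> 0 < d ->
  Fisher Ne L sigma c4 d phi =
  ((modc c4 ^+ 4 * L%:R ^+ 3 * d ^+ 2 * pi ^+ 2 * Ne%:R ^+ 2 * (Ne%:R ^+ 2 - 1))
    / (6 * sigma ^+ 2 * (sigma ^+ 2 + modc c4 ^+ 2 * L%:R * d * Ne%:R)) * cos phi ^+ 2)%:C.
Proof.
move=> hN hL hs hd.
have hpos : 0 < sigma ^+ 2 + modc c4 ^+ 2 * L%:R * d * Ne%:R.
  have : 0 <= modc c4 ^+ 2 * L%:R * d * Ne%:R.
    apply: mulr_ge0; [apply: mulr_ge0; [apply: mulr_ge0; [exact: sqr_ge0 | exact: ler0n] | exact: ltW] | exact: ler0n].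
  have : 0 < sigma ^+ 2 by rewrite exprn_gt0.
  lra.
have hs2 : (sigma ^+ 2)%:C != 0 :> R[i] by rewrite realC_eq0 gt_eqF // exprn_gt0.
have eg : (sigma ^+ 2)%:C + `|c4| ^+ 2 * L%:R * d%:C * Ne%:R
      = (sigma ^+ 2 + modc c4 ^+ 2 * L%:R * d * Ne%:R)%:C :> R[i].
  by rewrite normc_modc realCD !realCXn !realCM !realC_nat.
have hg : (sigma ^+ 2)%:C + `|c4| ^+ 2 * L%:R * d%:C * Ne%:R != 0 :> R[i].
  by rewrite eg realC_eq0 gt_eqF.
rewrite /Fisher mderive_Cmat /Cmat tensmxZr scalerA.
rewrite (@trace_main _ L Ne _ _ _ _ _ _ _ _ (@hrc R Ne phi) (@hrc' R Ne phi) (@hr'c R Ne phi) (@hr'c' R Ne phi) hs2 hg).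
have hsig : sigma%:C != 0 :> R[i] by rewrite realC_eq0 gt_eqF.
move: hg; rewrite eg => hg.
have hg' := hg; move: hg'; rewrite !(realCV, realCXn, realCM, realCD, realCB, realC_nat) => hg'.
rewrite normc_modc.
rewrite ?(realCV, realCXn, realCM, realCD, realCB, realC_nat).
by field; apply/andP; split.
Qed.
End Fish.
Section Prob.
Variable R : realType.
Local Open Scope classical_set_scope.

Lemma cos_pos_iff (phi : R) : -(pi/2) <= phi <= pi/2 ->
  (0 < cos phi) = (-(pi/2) < phi < pi/2).
Proof.
move=> /andP[h1 h2]; apply/idP/idP; last exact: cos_gt0_pihalf.
move=> hc.
have [e|ne1] := eqVneq phi (pi/2); first by rewrite e cos_pihalf ltxx in hc.
have [e|ne2] := eqVneq phi (-(pi/2)); first by rewrite e cosN cos_pihalf ltxx in hc.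
by rewrite !lt_neqAle h1 h2 ne1 eq_sym ne2.
Qed.

Lemma cos_set (u phi : R) : 0 < u <= 1 -> -(pi/2) <= phi <= pi/2 ->
  (0 < cos phi < u) = ((-(pi/2) < phi < - acos u) || (acos u < phi < pi/2)).
Proof.
move=> /andP[hu0 hu1] hphi.
have hu : -1 <= u <= 1 by apply/andP; split => //; lra.
have [/andP[ha0 hapi] hac] := acos_def hu.
have hpi := pi_gt0 R.
have hapi2 : acos u < pi/2.
  rewrite -(ltr_cos (x := acos u) (y := pi/2)).
  - by rewrite cos_pihalf hac.
  - by rewrite in_itv /=; apply/andP; split; lra.
  - by rewrite in_itv /=; apply/andP; split; lra.
have e1 : (cos phi < u) = (acos u < `|phi|).
  rewrite -cos_norm -{1}hac ltr_cos //.
    by rewrite in_itv /=; apply/andP; split; lra.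
  rewrite in_itv /=.
  case/andP: hphi => h1 h2.
  by case: (lerP 0 phi) => h0; [rewrite ger0_norm // | rewrite ltr0_norm //];
    apply/andP; split; lra.
rewrite cos_pos_iff // e1.
case/andP: hphi => h1 h2.
case: (lerP 0 phi) => h0; [rewrite ger0_norm // | rewrite ltr0_norm //].
- apply/idP/idP.
  + by case/andP => /andP[_ ->] ->; rewrite orbT.
  + case/orP => /andP[p1 p2]; first by lra.
    by rewrite p1 p2 andbT; apply/andP; split; lra.
- apply/idP/idP.
  + move=> /andP[/andP[p1 _] p3]; rewrite p1 /=; apply/orP; left; lra.
  + case/orP => /andP[p1 p2]; last by lra.
    by rewrite p1 /=; apply/andP; split; lra.
Qed.
Local Notation mu := (@lebesgue_measure R).

Lemma int_const (T : set R) : measurable T -> T `<=` `[-(pi/2), pi/2] ->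
  (\int[mu]_(x in T) (uniform_pdf (-(pi/2)) (pi/2) x)%:E = (pi^-1)%:E * mu T)%E.
Proof.
move=> mT sT.
rewrite (eq_integral (fun _ => (pi^-1)%:E)); first by rewrite integral_cst.
move=> x; rewrite inE => /sT hx.
rewrite /uniform_pdf.
move: hx; rewrite /= in_itv /= => ->.
by rewrite opprK -splitr.
Qed.

Lemma asin_acos (u : R) : -1 <= u <= 1 -> asin u = pi/2 - acos u.
Proof.
move=> hu; have [/andP[h0 h1] hc] := acos_def hu.
rewrite -{1}hc.
have -> : cos (acos u) = sin (pi/2 - acos u).
  by rewrite sinB sin_pihalf cos_pihalf mul0r subr0 mul1r.
rewrite sinK // in_itv /=; apply/andP; split; lra.
Qed.

Lemma help1 (p a : R) : p != 0 ->
  p^-1 * (- a - - (p / 2) + (p / 2 - a)) = 2 / p * (p / 2 - a).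
Proof. by move=> hp; field. Qed.
Lemma help2 (p : R) : p != 0 ->
  p^-1 * (- 0 - - (p / 2) + (p / 2 - 0)) = 1.
Proof. by move=> hp; field. Qed.

Lemma help3 (p : R) : p != 0 -> p^-1 * (p / 2 - - (p / 2)) = 1.
Proof. by move=> hp; field. Qed.

Lemma prob_cos (u : R) (S : set R) : 0 < u ->
  (forall phi, -(pi/2) <= phi <= pi/2 -> (S phi <-> 0 < cos phi < u)) ->
  uniform_prob (@mpi2_lt_pi2 R) S = (if u < 1 then 2/pi * asin u else 1)%:E.
Proof.
move=> hu hS.
have hpi := pi_gt0 R.
rewrite /uniform_prob integral_uniform_pdf.
have [hu1|hu1] := leP u 1.
- have hu' : -1 <= u <= 1 by apply/andP; split => //; lra.
  have [/andP[ha0 hapi] hac] := acos_def hu'.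
  have hapi2 : acos u < pi/2.
    rewrite -(ltr_cos (x := acos u) (y := pi/2)).
    + by rewrite cos_pihalf hac.
    + by rewrite in_itv /=; apply/andP; split; lra.
    + by rewrite in_itv /=; apply/andP; split; lra.
  have -> : S `&` `[-(pi/2), pi/2] = `](-(pi/2)), (- acos u)[ `|` `](acos u), (pi/2)[.
    apply/seteqP; split => x /=.
    + case=> Sx; rewrite in_itv /= => hx.
      have := (hS x hx).1 Sx; rewrite cos_set //; last by rewrite hu.
      by case/orP => h; [left|right]; rewrite in_itv /=.
    + have hx' : forall y : R, ((-(pi/2) < y < - acos u) \/ (acos u < y < pi/2)) ->
          (- (pi / 2) <= y <= pi / 2).
        move=> y; case => /andP[h1 h2]; apply/andP; split; lra.
      rewrite !in_itv /= => h; have hx := hx' x h; split; last exact: hx.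
      apply/(hS x hx); rewrite cos_set //; last by rewrite hu.
      by case: h => ->; rewrite ?orbT.
  rewrite int_const; first last.
  + move=> y; rewrite /= !in_itv /=; case => /andP[h1 h2]; apply/andP; split; lra.
  + by apply: measurableU; exact: measurable_itv.
  rewrite measureU; first last.
  + apply/seteqP; split => y //=; rewrite !in_itv /= => -[/andP[h1 h2] /andP[h3 h4]]; lra.
  + exact: measurable_itv.
  + exact: measurable_itv.
  rewrite /= !lebesgue_measure_itv /= !lte_fin.
  have c1 : - (pi / 2) < - acos u by lra.
  rewrite c1 hapi2 -!EFinD -EFinM.
  have pi0 : pi != 0 :> R by rewrite gt_eqF.
  case: ifP => h.
  + by rewrite asin_acos //; congr EFin; apply: help1.
  + have -> : u = 1 by apply/eqP; rewrite eq_le hu1 leNgt h.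
    by rewrite acos1; congr EFin; apply: help2.
- have key : forall x : R, - (pi / 2) <= x <= pi / 2 ->
     (0 < cos x < u) = (- (pi / 2) < x < pi / 2).
    move=> x hx; rewrite -cos_pos_iff //.
    by have := cos_le1 x; case: (0 < cos x) => //= hc; apply: (le_lt_trans hc).
  have -> : S `&` `[-(pi/2), pi/2] = `](-(pi/2)), (pi/2)[.
    apply/seteqP; split => x /=.
    + case=> Sx; rewrite !in_itv /= => hx.
      by have := (hS x hx).1 Sx; rewrite key.
    + rewrite !in_itv /= => /andP[h1 h2].
      have hx : - (pi / 2) <= x <= pi / 2 by apply/andP; split; lra.
      split; last by [].
      by apply/(hS x hx); rewrite key // h1 h2.
  rewrite int_const; first last.
  + by move=> y; rewrite /= !in_itv /= => /andP[h1 h2]; apply/andP; split; lra.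
  + exact: measurable_itv.
  rewrite /= lebesgue_measure_itv /= lte_fin.
  have c1 : - (pi / 2) < pi / 2 :> R by lra.
  have pi0 : pi != 0 :> R by rewrite gt_eqF.
  rewrite c1 -EFinD -EFinM ifF; last by apply/negbTE; rewrite -leNgt ltW.
  by congr EFin; apply: help3.
Qed.
End Prob.

Theorem lemma6 (R : realType) (Ne L : nat) (sigma : R) (c4 : R[i]) (d : R)
  (hNe : (2 <= Ne)%N) (hL : (1 <= L)%N) (hsigma : 0 < sigma)
  (hc4 : c4 != 0) (hd : 0 < d) :
  (forall phi : R, - (pi / 2) < phi < pi / 2 ->
     CRB Ne L sigma c4 d phi =
     ((6 * sigma ^+ 2 * (sigma ^+ 2 + modc c4 ^+ 2 * L%:R * d * Ne%:R))
      / (modc c4 ^+ 4 * L%:R ^+ 3 * d ^+ 2 * pi ^+ 2 * cos phi ^+ 2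
         * Ne%:R ^+ 2 * (Ne%:R ^+ 2 - 1)))%:C)
  /\
  (forall eps : R, 0 < eps ->
     let u := Num.sqrt 6 * sigma
              * (Num.sqrt (eps * modc c4 ^+ 4 * L%:R ^+ 3 * d ^+ 2 * pi ^+ 2
                            * Ne%:R ^+ 2 * (Ne%:R ^+ 2 - 1)))^-1
              * Num.sqrt (sigma ^+ 2 + modc c4 ^+ 2 * L%:R * d * Ne%:R) in
     uniform_prob (@mpi2_lt_pi2 R)
       [set phi | eps%:C < CRB Ne L sigma c4 d phi]
     = (if u < 1 then 2 / pi * asin u else 1)%:E).
Proof.
have hN0 : (0 < Ne)%N by apply: leq_trans hNe.
have hm : 0 < modc c4.
  rewrite /modc sqrtr_gt0; move: hc4; case: c4 => a b.
  rewrite eq_complex /= negb_and => hab.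
  rewrite lt0r addr_ge0 ?sqr_ge0 // andbT paddr_eq0 ?sqr_ge0 // !sqrf_eq0.
  by rewrite negb_and.
have hpi := pi_gt0 R.
have hNr : 1 < (Ne%:R : R) by rewrite ltr1n.
have hLr : 0 < (L%:R : R) by rewrite ltr0n.
have hG : 0 < sigma ^+ 2 + modc c4 ^+ 2 * L%:R * d * Ne%:R.
  have : 0 < modc c4 ^+ 2 * L%:R * d * Ne%:R.
    by rewrite !mulr_gt0 ?exprn_gt0 // ltr0n.
  have : 0 < sigma ^+ 2 by rewrite exprn_gt0.
  lra.
have hD : 0 < modc c4 ^+ 4 * L%:R ^+ 3 * d ^+ 2 * pi ^+ 2 * Ne%:R ^+ 2 * (Ne%:R ^+ 2 - 1).
  rewrite !mulr_gt0 ?exprn_gt0 //; try lra.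
  rewrite subr_gt0 -[X in X < _](expr1n _ 2) ltr_pXn2r // ?nnegrE; lra.
have hCRB : forall phi, CRB Ne L sigma c4 d phi =
  (((modc c4 ^+ 4 * L%:R ^+ 3 * d ^+ 2 * pi ^+ 2 * Ne%:R ^+ 2 * (Ne%:R ^+ 2 - 1))
    / (6 * sigma ^+ 2 * (sigma ^+ 2 + modc c4 ^+ 2 * L%:R * d * Ne%:R)) * cos phi ^+ 2)^-1)%:C.
  by move=> phi; rewrite /CRB Fisher_val // realCV.
split.
  move=> phi hphi; rewrite hCRB; congr (_%:C).
  have hc : cos phi != 0 by rewrite gt_eqF // cos_gt0_pihalf.
  have hm0 : modc c4 != 0 by rewrite gt_eqF.
  have hL0 : (L%:R : R) != 0 by rewrite gt_eqF.
  have hd0 : d != 0 by rewrite gt_eqF.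
  have hpi0 : pi != 0 :> R by rewrite gt_eqF.
  have hN0' : (Ne%:R : R) != 0 by rewrite gt_eqF //; lra.
  have hN1 : (Ne%:R ^+ 2 - 1 : R) != 0.
    by rewrite gt_eqF // subr_gt0 -[X in X < _](expr1n _ 2) ltr_pXn2r // ?nnegrE; lra.
  have hs0 : sigma != 0 by rewrite gt_eqF.
  have hG0 : sigma ^+ 2 + modc c4 ^+ 2 * L%:R * d * Ne%:R != 0 by rewrite gt_eqF.
  move: hpi0; move: (pi : R) => p hp0.
  by field; rewrite hN1 hN0' hc hd0 hL0 hm0 hG0 hs0 hp0.
move=> eps heps.
set D := modc c4 ^+ 4 * L%:R ^+ 3 * d ^+ 2 * pi ^+ 2 * Ne%:R ^+ 2 * (Ne%:R ^+ 2 - 1) in hD hCRB *.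
set G := sigma ^+ 2 + modc c4 ^+ 2 * L%:R * d * Ne%:R in hG hCRB *.
set K := D / (6 * sigma ^+ 2 * G) in hCRB.
have hK : 0 < K by rewrite /K divr_gt0 // !mulr_gt0 // exprn_gt0.
have hX : eps * modc c4 ^+ 4 * L%:R ^+ 3 * d ^+ 2 * pi ^+ 2 * Ne%:R ^+ 2 * (Ne%:R ^+ 2 - 1)
    = eps * D by rewrite /D; ring.
rewrite hX => u.
have hNp : 0 < (Ne%:R : R) by lra.
have hN1p : 0 < (Ne%:R ^+ 2 - 1 : R).
  by rewrite subr_gt0 -[X in X < _](expr1n _ 2) ltr_pXn2r // ?nnegrE; lra.
have hu0 : 0 < u.
  by rewrite /u !mulr_gt0 // ?invr_gt0 ?sqrtr_gt0 // ?mulr_gt0 //.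
have hu2 : u ^+ 2 = (eps * K)^-1.
  rewrite /u !exprMn exprVn !sqr_sqrtr ?ltW ?mulr_gt0 //.
  have hs0 : sigma != 0 by rewrite gt_eqF.
  have hG0 : G != 0 by rewrite gt_eqF.
  have hD0 : D != 0 by rewrite gt_eqF.
  have he0 : eps != 0 by rewrite gt_eqF.
  rewrite /K; by field; rewrite hs0 hG0 hD0 he0.
apply: (@prob_cos R u _ hu0) => phi hphi.
rewrite /= hCRB ltcR.
have hc0 : 0 <= cos phi := cos_ge0_pihalf hphi.
have [hc|hc] := eqVneq (cos phi) 0.
  rewrite hc expr0n mulr0 invr0 ltxx; split => // h; lra.
have hcp : 0 < cos phi by rewrite lt_neqAle eq_sym hc.
rewrite hcp /=.
rewrite -(@ltr_pXn2r _ 2 isT (cos phi) u) ?nnegrE ?ltW // hu2.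
rewrite -[(K * _)^-1]div1r -[(eps * K)^-1]div1r !ltr_pdivlMr ?mulr_gt0 ?exprn_gt0 //.
have -> : cos phi ^+ 2 * (eps * K) = eps * (K * cos phi ^+ 2) by ring.
  by [].
all: by rewrite invr_gt0 !mulr_gt0 // exprn_gt0.
Qed.
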